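(* Let $n\geq 0$, $N\geq n$ and $k\geq 1$ be integers with $N+2>2(n+1)k$. Let $x_j=\cos\!\big((N+1-j)\pi/(N+2)\big)$ for $0\leq j\leq N$, let $D=\sqrt{2/(N+2)}\,\operatorname{diag}\!\big(\sqrt{1-x_0^2},\ldots,\sqrt{1-x_N^2}\big)$, and let $V\in\mathbb{R}^{(N+1)\times(N-n)}$ be the matrix $V=D\,W$ where $W_{i,j}=U_{n+1+j}(x_i)$ for $0\leq i\leq N$, $0\leq j\leq N-n-1$, with $U_\ell$ the Chebyshev polynomial of the second kind of degree $\ell$. Then $V^\top$ satisfies the restricted isometry property of order $k$ with constant $\delta_k=2(n+1)k/(N+2)$, i.e. \[ (1-\delta_k)\|\underline{z}\|_2^2\leq\|V^\top\underline{z}\|_2^2\leq(1+\delta_k)\|\underline{z}\|_2^2 \] for every $\underline{z}\in\mathbb{C}^{N+1}$ with at most $k$ nonzero entries.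
   Context: $U_\ell$ is the Chebyshev polynomial of the second kind of degree $\ell$, $U_\ell(\cos\theta)=\sin((\ell+1)\theta)/\sin\theta$. $\|\cdot\|_2$ is the Euclidean norm. Note that the hypothesis gives $0<\delta_k<1$. *)

(* Defs.v *)
From mathcomp Require Import all_boot all_order all_algebra.
From mathcomp Require Import all_classical all_reals all_analysis.
From mathcomp Require Export complex.
Set Implicit Arguments. Unset Strict Implicit. Unset Printing Implicit Defensive.
Import Order.TTheory GRing.Theory Num.Theory.
Local Open Scope ring_scope.

Section Defs.
Variable R : realType.

Fixpoint chebU (l : nat) (x : R) : R :=
  match l with
  | 0 => 1
  | 1 => 2 * x
  | (l'.+1 as m).+1 => 2 * x * chebU m x - chebU l' x
  end.

Definition cheb_node (N j : nat) : R :=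
  cos ((N.+1 - j)%:R * pi / (N.+2)%:R).

Definition Dmat (N : nat) : 'M[R]_N.+1 :=
  \matrix_(i, j) (if i == j then
     Num.sqrt (2 / (N.+2)%:R) * Num.sqrt (1 - cheb_node N i ^+ 2) else 0).

Definition Wmat (N n : nat) : 'M[R]_(N.+1, N - n) :=
  \matrix_(i, j) chebU (n.+1 + j) (cheb_node N i).

Definition Vmat (N n : nat) : 'M[R]_(N.+1, N - n) := Dmat N *m Wmat N n.

Definition csq (c : R[i]) : R := (complex.Re c) ^+ 2 + (complex.Im c) ^+ 2.

Definition sqnorm m (z : 'cV[R[i]]_m) : R := \sum_(i < m) csq (z i 0).

Definition supp_size m (z : 'cV[R[i]]_m) : nat := #|[set i | z i 0 != 0]|.

Definition cmx m p (A : 'M[R]_(m, p)) : 'M[R[i]]_(m, p) := map_mx (fun r => (r%:C)%C) A.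

End Defs.

Arguments chebU {R}.
Arguments cheb_node {R}.
Arguments Dmat {R}.
Arguments Wmat {R}.
Arguments Vmat {R}.

(* Main.v *)
Require Import Defs.
From mathcomp Require Import all_boot all_order all_algebra.
From mathcomp Require Import all_classical all_reals all_analysis.
From mathcomp Require Import complex.
Import Order.TTheory GRing.Theory Num.Theory.
Local Open Scope ring_scope.
From mathcomp Require Import ring lra zify.
Import Order.TTheory GRing.Theory Num.Theory.
Local Open Scope ring_scope.

Section Aux.
Variable R : realType.

Lemma sincos_natpi (c : nat) :
  sin (c%:R * pi) = 0 :> R /\ cos (c%:R * pi) = (-1) ^+ c :> R.
Proof.
elim: c => [|c [IHs IHc]]; first by rewrite mul0r sin0 cos0 expr0.
have -> : c.+1%:R * pi = c%:R * pi + pi :> R by rewrite -addn1 natrD mulrDl mul1r.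
by rewrite sinDpi cosDpi IHs IHc oppr0 exprS mulN1r.
Qed.

Lemma cos_tele (M : nat) (h : R) :
  2 * sin h * \sum_(j < M) cos (j%:R * (2 * h)) = sin ((2 * M%:R - 1) * h) + sin h.
Proof.
pose f (j : nat) := sin ((2 * j%:R - 1) * h).
have E : forall j : nat, 2 * sin h * cos (j%:R * (2 * h)) = f j.+1 - f j.
  move=> j; rewrite /f.
  have -> : (2 * j.+1%:R - 1) * h = j%:R * (2 * h) + h.
    by rewrite -addn1 natrD; ring.
  have -> : (2 * j%:R - 1) * h = j%:R * (2 * h) - h by ring.
  rewrite sinD sinB; ring.
rewrite mulr_sumr (eq_bigr (fun j : 'I_M => f j.+1 - f j)); last by move=> j _; rewrite E.
rewrite -(big_mkord xpredT (fun j => f j.+1 - f j)) telescope_sumr // /f.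
by rewrite mulr0 sub0r mulN1r sinN opprK.
Qed.

Definition Csum (M c : nat) : R := \sum_(j < M) cos (j%:R * (c%:R * pi / M%:R)).

Lemma Csum0 M : Csum M 0 = M%:R.
Proof.
rewrite /Csum (eq_bigr (fun _ => 1)); last by move=> j _; rewrite mul0r mul0r mulr0 cos0.
by rewrite sumr_const card_ord.
Qed.

Lemma CsumE M c : (0 < c)%N -> (c < 2 * M)%N ->
  Csum M c = (1 - (-1) ^+ c) / 2.
Proof.
move=> c0 cM.
have M0 : (0 < M)%N by case: M cM; rewrite ?muln0.
set h : R := c%:R * pi / (2 * M%:R).
have Mr : (0 : R) < M%:R by rewrite ltr0n.
have hpos : 0 < sin h.
  apply: sin_gt0_pi; apply/andP; split.
    by rewrite /h divr_gt0 ?mulr_gt0 ?ltr0n ?pi_gt0.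
  rewrite /h ltr_pdivrMr ?mulr_gt0 ?ltr0n //.
  rewrite mulrC ltr_pM2l ?pi_gt0 // -[2]/(2%:R) -natrM ltr_nat.
  by [].  
have H := cos_tele M h.
have E1 : 2 * h = c%:R * pi / M%:R.
  rewrite /h; field; by rewrite gt_eqF.
have E2 : (2 * M%:R - 1) * h = c%:R * pi - h.
  rewrite /h; field; by rewrite gt_eqF.
rewrite E1 E2 in H.
rewrite sinB (sincos_natpi c).1 (sincos_natpi c).2 in H.
rewrite /Csum.
apply: (@mulfI _ (2 * sin h)); first by rewrite mulf_neq0 // gt_eqF.
by rewrite H; field.
Qed.

Lemma sin_orth (M a b : nat) : (0 < a < M)%N -> (0 < b < M)%N ->
  \sum_(l < M) sin (l%:R * (a%:R * pi / M%:R)) * sin (l%:R * (b%:R * pi / M%:R))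
  = if a == b then M%:R / 2 else 0 :> R.
Proof.
wlog ba : a b / (b <= a)%N.
  move=> W Ha Hb; case: (leqP b a) => [ba|ab]; first exact: W.
  rewrite eq_sym -W ?(ltnW ab) //; apply: eq_bigr => l _; exact: mulrC.
move=> /andP[a0 aM] /andP[b0 bM].
have E : forall l : 'I_M, sin (l%:R * (a%:R * pi / M%:R)) * sin (l%:R * (b%:R * pi / M%:R))
   = (cos (l%:R * ((a - b)%N%:R * pi / M%:R)) - cos (l%:R * ((a + b)%N%:R * pi / M%:R))) / 2 :> R.
  move=> l.
  have -> : l%:R * ((a - b)%N%:R * pi / M%:R) = l%:R * (a%:R * pi / M%:R) - l%:R * (b%:R * pi / M%:R) :> R.
    by rewrite natrB //; ring.
  have -> : l%:R * ((a + b)%N%:R * pi / M%:R) = l%:R * (a%:R * pi / M%:R) + l%:R * (b%:R * pi / M%:R) :> R.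
    by rewrite natrD; ring.
  by rewrite cosB cosD; field.
rewrite (eq_bigr _ (fun l _ => E l))  -mulr_suml sumrB -/(Csum M (a - b)) -/(Csum M (a + b)).
case: eqP => [<-|ne].
  rewrite subnn Csum0 CsumE; last by lia. 2: by lia.
  by rewrite addnn -mul2n exprM expr2 mulrNN mulr1 expr1n subrr mul0r subr0.
rewrite !CsumE; try lia.
have -> : (a + b = (a - b) + 2 * b)%N by lia.
by rewrite exprD exprM expr2 mulrNN mulr1 expr1n mulr1 subrr mul0r.
Qed.

Lemma chebU_sin (t : R) l : sin t * chebU l (cos t) = sin (l.+1%:R * t).
Proof.
suff : sin t * chebU l (cos t) = sin (l.+1%:R * t) /\ sin t * chebU l.+1 (cos t) = sin (l.+2%:R * t) by case.
elim: l => [|l [IH1 IH2]].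
  split; first by rewrite /= mulr1 mul1r.
  have -> : 2%:R * t = t + t :> R by rewrite mulr_natl mulr2n.
  by rewrite /= sinD; ring.
split=> //.
have -> : chebU l.+2 (cos t) = 2 * cos t * chebU l.+1 (cos t) - chebU l (cos t) by [].
have E1 : l.+3%:R * t = l.+2%:R * t + t :> R by rewrite -[l.+3]addn1 natrD mulrDl mul1r.
have E2 : l.+1%:R * t = l.+2%:R * t - t :> R by rewrite -[l.+2]addn1 natrD mulrDl mul1r; ring.
rewrite mulrBr IH1.
have -> : sin t * (2 * cos t * chebU l.+1 (cos t)) = 2 * cos t * (sin t * chebU l.+1 (cos t)) by ring.
rewrite IH2.
rewrite E1 E2 sinB sinD; ring.
Qed.

Definition theta (N i : nat) : R := (N.+1 - i)%:R * pi / (N.+2)%:R.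
Definition sv (N i l : nat) : R := Num.sqrt (2 / (N.+2)%:R) * sin (l.+1%:R * theta N i).

Lemma row_orth N (i m : 'I_N.+1) :
  \sum_(l < N.+1) sv N i l * sv N m l = (i == m)%:R.
Proof.
have M0 : (0 : R) < (N.+2)%:R by rewrite ltr0n.
have sq : Num.sqrt (2 / (N.+2)%:R) ^+ 2 = 2 / (N.+2)%:R :> R.
  by rewrite sqr_sqrtr // divr_ge0 // ler0n.
rewrite (eq_bigr (fun l : 'I_N.+1 => 2 / (N.+2)%:R *
   (sin (l.+1%:R * theta N i) * sin (l.+1%:R * theta N m)))); last first.
  by move=> l _; rewrite /sv mulrACA -expr2 sq.
rewrite -mulr_sumr. have hi := ltn_ord i. have hm := ltn_ord m.
have := @sin_orth N.+2 (N.+1 - i) (N.+1 - m).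
rewrite big_ord_recl /= mul0r mul0r sin0 mul0r add0r.
move=> -> ; last (apply/andP; split; lia); last (apply/andP; split; lia).
have -> : ((N.+1 - i)%N == (N.+1 - m)%N) = (i == m).
  by apply/eqP/eqP => [H|->] //; apply: val_inj => /=; lia.
case: eqP => _ /=; last by rewrite mulr0.
field; by rewrite gt_eqF.
Qed.

Lemma Vmat_E N n (i : 'I_N.+1) (j : 'I_(N - n)) : Vmat N n i j = sv N i (n.+1 + j).
Proof.
rewrite /Vmat mxE (bigD1 i) //= big1 => [|k ki]; last first.
  by rewrite /Dmat !mxE eq_sym (negbTE ki) mul0r.
rewrite addr0 /Dmat /Wmat !mxE eqxx /cheb_node -/(theta N i).
have hi := ltn_ord i.
have th0 : 0 <= theta N i <= pi.
  apply/andP; split.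
    by rewrite /theta divr_ge0 ?mulr_ge0 ?ler0n ?pi_ge0.
  rewrite /theta ler_pdivrMr ?ltr0n // mulrC ler_pM2l ?pi_gt0 // ler_nat; lia.
rewrite -sin2cos2 sqrtr_sqr ger0_norm; last exact: sin_ge0_pi.
by rewrite -mulrA chebU_sin /sv.
Qed.

Lemma cs_ineq (I : finType) (A : {set I}) (c : I -> R) :
  (\sum_(i in A) c i) ^+ 2 <= #|A|%:R * \sum_(i in A) c i ^+ 2.
Proof.
set S := \sum_(i in A) c i; set S2 := \sum_(i in A) c i ^+ 2.
have H : \sum_(i in A) \sum_(j in A) (c i - c j) ^+ 2 = 2 * (#|A|%:R * S2 - S ^+ 2).
  transitivity (\sum_(i in A) (#|A|%:R * c i ^+ 2 + S2 - 2 * c i * S)).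
    apply: eq_bigr => i _.
    rewrite (eq_bigr (fun j => c i ^+ 2 + c j ^+ 2 - 2 * c i * c j)); last by move=> j _; ring.
    rewrite !big_split /= sumr_const sumrN -mulr_sumr -/S -/S2 -mulr_natl; ring.
  rewrite !big_split /= sumrN -mulr_sumr -mulr_suml sumr_const -mulr_natl /S /S2.
  rewrite -mulr_sumr -/S -/S2 -mulr_natr; ring.
have : 0 <= 2 * (#|A|%:R * S2 - S ^+ 2).
  by rewrite -H; apply: sumr_ge0 => i _; apply: sumr_ge0 => j _; exact: sqr_ge0.
rewrite pmulr_rge0 // subr_ge0 //.
Qed.

Lemma parseval N (a : 'I_N.+1 -> R) :
  \sum_(l < N.+1) (\sum_(i < N.+1) sv N i l * a i) ^+ 2 = \sum_(i < N.+1) a i ^+ 2.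
Proof.
transitivity (\sum_(l < N.+1) \sum_(i < N.+1) \sum_(m < N.+1) (sv N i l * sv N m l) * (a i * a m)).
  apply: eq_bigr => l _; rewrite expr2 mulr_suml; apply: eq_bigr => i _.
  rewrite mulr_sumr; apply: eq_bigr => m _; ring.
rewrite exchange_big /=; apply: eq_bigr => i _.
rewrite exchange_big /= (bigD1 i) //= [X in _ + X]big1 ?addr0; last first.
  by move=> m mi; rewrite -mulr_suml row_orth eq_sym (negbTE mi) mul0r.
by rewrite -mulr_suml row_orth eqxx mul1r expr2.
Qed.

Lemma split_sum N n (F : nat -> R) : (n <= N)%N ->
  \sum_(l < N.+1) F l = \sum_(l < n.+1) F l + \sum_(j < N - n) F (n.+1 + j)%N.
Proof.
move=> nN.
rewrite -(big_mkord xpredT F) (big_cat_nat (leq0n n.+1)) //= big_mkord.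
congr (_ + _).
rewrite -(big_mkord xpredT (fun j => F (n.+1 + j)%N)) -{1}[n.+1]add0n big_addn subSS.
by apply: eq_bigr => j _; rewrite addnC.
Qed.

Lemma sv_sq N i l : sv N i l ^+ 2 <= 2 / (N.+2)%:R.
Proof.
rewrite /sv exprMn sqr_sqrtr ?divr_ge0 ?ler0n //.
rewrite ler_piMr ?divr_ge0 ?ler0n // sin2cos2 lerBlDr lerDl; exact: sqr_ge0.
Qed.

Lemma quad_bound N n k (a : 'I_N.+1 -> R) (A : {set 'I_N.+1}) :
  (n <= N)%N -> (forall i, i \notin A -> a i = 0) -> (#|A| <= k)%N ->
  let delta : R := (2 * n.+1 * k)%:R / (N.+2)%:R in
  let Q := \sum_(j < N - n) (\sum_(i < N.+1) Vmat N n i j * a i) ^+ 2 in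
  (1 - delta) * \sum_(i < N.+1) a i ^+ 2 <= Q /\ Q <= \sum_(i < N.+1) a i ^+ 2.
Proof.
move=> nN Ha hA delta Q.
set S := \sum_(i < N.+1) a i ^+ 2.
pose y l := \sum_(i < N.+1) sv N i l * a i.
have QE : Q = S - \sum_(l < n.+1) y l ^+ 2.
  rewrite /S -parseval (@split_sum N n (fun l => (\sum_(i < N.+1) sv N i l * a i) ^+ 2) nN) addrC addKr /Q.
  apply: eq_bigr => j _; congr (_ ^+ 2); apply: eq_bigr => i _; by rewrite Vmat_E.
have SA : S = \sum_(i in A) a i ^+ 2.
  rewrite /S (bigID (fun i => i \in A)) /= [X in _ + X]big1 ?addr0 // => i iA.
  by rewrite Ha // expr0n.
have yb : forall l, y l ^+ 2 <= k%:R * (2 / (N.+2)%:R) * S.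
  move=> l.
  have -> : y l = \sum_(i in A) sv N i l * a i.
    rewrite /y (bigID (fun i => i \in A)) /= [X in _ + X]big1 ?addr0 // => i iA.
    by rewrite Ha // mulr0.
  apply: (@le_trans _ _ (#|A|%:R * \sum_(i in A) (sv N i l * a i) ^+ 2)).
    exact: (cs_ineq _ A (fun i => sv N i l * a i)).
  have S0 : 0 <= S by apply: sumr_ge0 => i _; exact: sqr_ge0.
  rewrite -mulrA; apply: ler_pM.
  - exact: ler0n.
  - by apply: sumr_ge0 => i _; exact: sqr_ge0.
  - by rewrite ler_nat.
  rewrite SA mulr_sumr; apply: ler_sum => i _.
  rewrite exprMn; apply: ler_pM; try exact: sqr_ge0; last exact: lexx.
  exact: sv_sq.
have S0 : 0 <= S by apply: sumr_ge0 => i _; exact: sqr_ge0.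
have Y0 : 0 <= \sum_(l < n.+1) y l ^+ 2 by apply: sumr_ge0 => l _; exact: sqr_ge0.
have YB : \sum_(l < n.+1) y l ^+ 2 <= delta * S.
  apply: (@le_trans _ _ (\sum_(l < n.+1) k%:R * (2 / (N.+2)%:R) * S)); first by apply: ler_sum => l _; exact: yb.
  rewrite sumr_const card_ord -mulr_natl /delta !natrM.
  rewrite le_eqVlt; apply/orP; left; apply/eqP.
  field; by rewrite gt_eqF // ltr0n.
rewrite QE; split; last by rewrite lerBlDr lerDl.
rewrite mulrBl mul1r; exact: lerB.
Qed.
End Aux.

Lemma Re_sum (R : realType) m (F : 'I_m -> R[i]) : complex.Re (\sum_(i < m) F i) = \sum_(i < m) complex.Re (F i).
Proof. by apply: (big_morph (@complex.Re R)) => // -[x1 y1] [x2 y2]. Qed.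

Lemma Im_sum (R : realType) m (F : 'I_m -> R[i]) : complex.Im (\sum_(i < m) F i) = \sum_(i < m) complex.Im (F i).
Proof. by apply: (big_morph (@complex.Im R)) => // -[x1 y1] [x2 y2]. Qed.

Lemma Re_rM (R : realType) (r : R) (w : R[i]) : complex.Re ((r%:C)%C * w) = r * complex.Re w.
Proof. by case: w => x y /=; ring. Qed.

Lemma Im_rM (R : realType) (r : R) (w : R[i]) : complex.Im ((r%:C)%C * w) = r * complex.Im w.
Proof. by case: w => x y /=; ring. Qed.

Theorem proposition2p2 (R : realType) (n N k : nat)
  (hnN : (n <= N)%N) (hk : (1 <= k)%N) (hNk : (2 * n.+1 * k < N.+2)%N) :
  let delta : R := (2 * n.+1 * k)%:R / (N.+2)%:R in
  forall z : 'cV[R[i]]_N.+1, (supp_size z <= k)%N ->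
    (1 - delta) * sqnorm z <= sqnorm ((cmx (Vmat N n))^T *m z) /\
    sqnorm ((cmx (Vmat N n))^T *m z) <= (1 + delta) * sqnorm z.
Proof.
move=> delta z hz.
set A := [set i | z i 0 != 0].
pose a i := complex.Re (z i 0); pose b i := complex.Im (z i 0).
have Ha : forall i, i \notin A -> a i = 0.
  by move=> i; rewrite inE negbK => /eqP; rewrite /a => ->.
have Hb : forall i, i \notin A -> b i = 0.
  by move=> i; rewrite inE negbK => /eqP; rewrite /b => ->.
have [Qa1 Qa2] := @quad_bound R N n k a A hnN Ha hz.
have [Qb1 Qb2] := @quad_bound R N n k b A hnN Hb hz.
rewrite -/delta in Qa1 Qb1.
have E1 : sqnorm z = \sum_(i < N.+1) a i ^+ 2 + \sum_(i < N.+1) b i ^+ 2.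
  by rewrite /sqnorm /csq big_split.
have E2 : sqnorm ((cmx (Vmat N n))^T *m z) =
   \sum_(j < N - n) (\sum_(i < N.+1) Vmat N n i j * a i) ^+ 2 +
   \sum_(j < N - n) (\sum_(i < N.+1) Vmat N n i j * b i) ^+ 2.
  rewrite /sqnorm -big_split; apply: eq_bigr => j _.
  rewrite /csq mxE Re_sum Im_sum; congr (_ ^+ 2 + _ ^+ 2); apply: eq_bigr => i _;
  by rewrite !mxE ?Re_rM ?Im_rM.
have d0 : 0 <= delta by rewrite /delta divr_ge0 ?ler0n.
have Sa : 0 <= \sum_(i < N.+1) a i ^+ 2 by apply: sumr_ge0 => i _; exact: sqr_ge0.
have Sb : 0 <= \sum_(i < N.+1) b i ^+ 2 by apply: sumr_ge0 => i _; exact: sqr_ge0.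
rewrite E1 E2; split; first by nra.
nra.
Qed.
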